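(* There exists $\kappa>0$ such that for every $\omega\in\partial B\setminus\{z=0\}$, $$\gamma(s,\omega)\in\Gamma_{B,\kappa}(\omega)\quad\text{for all }s\in(0,1).$$
   Context: The first Heisenberg group $\mathbb{H}^1$ is $\mathbb{R}^3$ (points $(z,t)$, $z=x+\mathrm{i}y$) with product $(x,y,t)\cdot(x',y',t')=(x+x',y+y',t+t'-2xy'+2yx')$. Korányi norm $\|(z,t)\|=(|z|^4+t^2)^{1/4}$, distance $d(p,q)=\|q^{-1}\cdot p\|$, $d(q,A)=\inf_{a\in A}d(q,a)$, $B=\{q:\|q\|<1\}$. Radial curves: for $\omega=(z,t)\in\partial B$, $z\ne0$, $\gamma(s,\omega)=\big(sz\,e^{-\mathrm{i}\frac{t}{|z|^2}\log s},s^2t\big)$. For $\kappa>0$ and $\omega\in\partial B$, the nontangential region is $\Gamma_{B,\kappa}(\omega)=\{q\in B: d(q,\omega)<(1+\kappa)\,d(q,\partial B)\}$. *)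

(* Defs.v *)
From Stdlib Require Import Reals Lra.
Open Scope R_scope.

Definition H1 := (R * R * R)%type.
Definition hx (p : H1) : R := fst (fst p).
Definition hy (p : H1) : R := snd (fst p).
Definition ht (p : H1) : R := snd p.

Definition hmul (p q : H1) : H1 :=
  (hx p + hx q, hy p + hy q, ht p + ht q - 2 * hx p * hy q + 2 * hy p * hx q).
Definition hinv (p : H1) : H1 := (- hx p, - hy p, - ht p).

Definition absz2 (p : H1) : R := hx p ^ 2 + hy p ^ 2.

Definition knorm (p : H1) : R := sqrt (sqrt (absz2 p ^ 2 + ht p ^ 2)).

Definition kdist (p q : H1) : R := knorm (hmul (hinv q) p).

Definition inB (q : H1) : Prop := knorm q < 1.
Definition inbdB (q : H1) : Prop := knorm q = 1.

Definition is_dist_to_set (q : H1) (A : H1 -> Prop) (m : R) : Prop :=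
  (forall a, A a -> m <= kdist q a) /\
  (forall m', (forall a, A a -> m' <= kdist q a) -> m' <= m).

Definition Gamma (kappa : R) (omega q : H1) : Prop :=
  inB q /\ exists m, is_dist_to_set q inbdB m /\ kdist q omega < (1 + kappa) * m.

(* radial curve gamma(s,omega) = (s z e^{-i (t/|z|^2) log s}, s^2 t) *)
Definition gamma_curve (s : R) (omega : H1) : H1 :=
  let th := - (ht omega / absz2 omega) * ln s in
  (s * (hx omega * cos th - hy omega * sin th),
   s * (hx omega * sin th + hy omega * cos th),
   s ^ 2 * ht omega).

(* Main.v *)
Require Import Defs.
From Stdlib Require Import Reals.
From Stdlib Require Import Lra Psatz.
Open Scope R_scope.

Lemma sin_taylor (th : R) : -1 <= th <= 1 -> - (th^2/6) <= sin th - th <= th^2/6.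
Proof.
  intros H.
  assert (Hpi := PI2_1).
  assert (key : forall a, 0 <= a <= 1 -> a - a^2/6 <= sin a <= a).
  { intros a Ha. destruct (sin_bound a 0 ltac:(lra) ltac:(lra)) as [H1 _].
    unfold sin_approx, sin_term in H1. simpl in H1.
    replace (1+1+1+1+1+1) with 6 in H1 by ring.
    replace (a * (a * (a * 1))) with (a^3) in H1 by ring.
    assert (a^3 <= a^2) by (simpl; nra).
    split; [lra|].
    destruct (Req_dec a 0) as [->|Hn]; [rewrite sin_0; lra|].
    left; apply sin_lt_x; lra. }
  destruct (Rle_dec 0 th) as [Hp|Hn].
  - destruct (key th ltac:(lra)) as [A B]. assert (0 <= th^2) by nra. lra.
  - destruct (key (- th) ltac:(lra)) as [A B]. rewrite sin_neg in A, B.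
    assert (E: (- th)^2 = th^2) by ring. rewrite E in A. lra.
Qed.

Lemma cos_taylor (th : R) : -1 <= th <= 1 -> 1 - cos th <= th^2/2.
Proof.
  intros H. assert (Hpi := PI2_1).
  destruct (cos_bound th 0) as [H1 H2]; [lra|lra|].
  unfold cos_approx, cos_term in H1. simpl in H1.
  replace (th * (th * 1)) with (th^2) in H1 by ring. lra.
Qed.

Lemma ln_bounds (s : R) : 0 < s -> 1 - s <= - ln s <= / s - 1.
Proof.
  intros Hs. split.
  - pose proof (exp_ineq1_le (ln s)). rewrite exp_ln in H by lra. lra.
  - pose proof (exp_ineq1_le (ln (/ s))). rewrite exp_ln in H by (apply Rinv_0_lt_compat; lra).
    rewrite ln_Rinv in H by lra. lra.
Qed.

Lemma knorm_facts (p : H1) : 0 <= knorm p /\ knorm p ^ 4 = absz2 p ^ 2 + ht p ^ 2.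
Proof.
  unfold knorm. set (Z := absz2 p ^ 2 + ht p ^ 2).
  assert (HZ : 0 <= Z) by (unfold Z; nra).
  split; [apply sqrt_pos|].
  replace (sqrt (sqrt Z) ^ 4) with ((sqrt (sqrt Z) ^ 2) ^ 2) by ring.
  rewrite pow2_sqrt by apply sqrt_pos. rewrite pow2_sqrt by exact HZ. reflexivity.
Qed.

Lemma root4_le (a b : R) : 0 <= a -> 0 <= b -> a^4 <= b^4 -> a <= b.
Proof.
  intros Ha Hb H. destruct (Rle_dec a b) as [|Hn]; [assumption|].
  exfalso. assert (b < a) by lra.
  assert (b*b < a*a) by nra. assert (0 <= b*b) by nra.
  assert ((b*b)*(b*b) < (a*a)*(a*a)) by nra.
  replace (a^4) with ((a*a)*(a*a)) in H by ring. replace (b^4) with ((b*b)*(b*b)) in H by ring. lra.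
Qed.

Lemma root4_eq (a b : R) : 0 <= a -> 0 <= b -> a^4 = b^4 -> a = b.
Proof. intros; apply Rle_antisym; apply root4_le; lra. Qed.

Lemma tri2 (a1 a2 b1 b2 la lb : R) : 0 <= la -> 0 <= lb ->
  a1^2 + a2^2 <= la^2 -> b1^2 + b2^2 <= lb^2 ->
  (a1+b1)^2 + (a2+b2)^2 <= (la+lb)^2.
Proof.
  intros Hla Hlb Ha Hb.
  assert (CS : (a1*b1+a2*b2)^2 <= la^2 * lb^2).
  { assert (Eq : (a1^2+a2^2)*(b1^2+b2^2) - (a1*b1+a2*b2)^2 = (a1*b2-a2*b1)^2) by ring.
    pose proof (pow2_ge_0 (a1*b2-a2*b1)).
    assert ((a1^2+a2^2)*(b1^2+b2^2) <= la^2*lb^2) by (apply Rmult_le_compat; nra).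
    lra. }
  assert (a1*b1+a2*b2 <= la*lb).
  { destruct (Rle_dec (a1*b1+a2*b2) (la*lb)) as [|Hn]; [assumption|].
    assert (0 <= la*lb) by nra. nra. }
  nra.
Qed.

Lemma est (r t s th L : R) : 0 < r -> r^2 + t^2 = 1 -> 0 < s < 1 -> th * r = t * L ->
  1 - s <= L <= /s - 1 ->
  0 <= r*(1 - 2*s*cos th + s^2)*(r+2*(1-s)) <= 48*(1-s)^2 /\
  -(24*(1-s)^2) <= ((s^2-1)*t + 2*s*r*sin th)*(r+2*(1-s)) <= 24*(1-s)^2.
Proof.
  intros Hr Hrt Hs Hth HL.
  set (e := 1 - s). set (c := cos th). set (sn := sin th).
  assert (Hed : e = 1 - s) by reflexivity.
  assert (Hc := COS_bound th). assert (Hsn := SIN_bound th).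
  fold c in Hc. fold sn in Hsn.
  assert (Hr1 : r <= 1) by nra.
  assert (Ht1 : -1 <= t <= 1) by nra.
  assert (He : 0 < e < 1) by (unfold e; lra).
  set (P := 1 - 2*s*c + s^2).
  assert (HPe : P = e^2 + 2*s*(1-c)) by (unfold P, e; ring).
  assert (HP0 : 0 <= P) by (rewrite HPe; nra).
  set (T := (s^2-1)*t + 2*s*r*sn).
  destruct (Rle_dec s (1/2)) as [Hs2|Hs2].
  -
    assert (HP4 : P <= 9/4) by (assert (0 <= s*(1+c)) by (apply Rmult_le_pos; lra); unfold P; nra).
    assert (HrP : r*P <= 9/4) by nra.
    assert (HrP0 : 0 <= r*P) by nra.
    assert (Hw : 0 < r + 2*e <= 3) by lra.
    assert (Hsnr : -1 <= 2*s*r*sn <= 1).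
    { assert (0 <= s*r <= 1/2) by nra. nra. }
    assert (-1 <= (s^2-1)*t <= 1). { assert (0 <= 1 - s^2 <= 1) by nra. nra. }
    assert (HT : -2 <= T <= 2) by (unfold T; lra).
    assert (He2 : 1/4 <= e^2) by nra.
    split.
    + split; [nra|]. nra.
    + split; nra.
  - assert (Hs2' : 1/2 < s) by lra.
    assert (HL2 : e <= L <= 2*e).
    { split; [unfold e; lra|]. assert (/s - 1 = e / s) by (unfold e; field; lra).
      assert (e / s <= 2 * e). { apply Rmult_le_reg_r with s; [lra|].
        unfold Rdiv; rewrite Rmult_assoc, Rinv_l by lra. nra. }
      lra. }
    destruct (Rle_dec r (2*e)) as [Hre|Hre].
    +
      assert (HP : P <= e^2 + 4) by (rewrite HPe; nra).
      assert (HrP : r*P <= 2*e*(e^2+4)) by (apply Rmult_le_compat; nra).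
      assert (HrP0 : 0 <= r*P) by nra.
      assert (He4 : e^2 + 4 <= 17/4) by nra.
      assert (HT : - (6*e) <= T <= 6*e).
      { unfold T. assert (- (2*e) <= (s^2-1)*t <= 2*e).
        { assert (0 <= 1 - s^2 <= 2*e) by (unfold e; nra). nra. }
        assert (- (4*e) <= 2*s*r*sn <= 4*e).
        { assert (0 <= s*r <= 2*e) by nra. nra. }
        lra. }
      split.
      * split; [nra|].
        assert (r*P*(r+2*e) <= (2*e*(e^2+4))*(4*e)) by (apply Rmult_le_compat; nra).
        nra.
      * assert (0 < r + 2*e <= 4*e) by lra. split; nra.
    +
      assert (Hre' : 2*e < r) by lra.
      assert (Hthr : (th*r)^2 <= 4*e^2).
      { rewrite Hth. assert (t^2 <= 1) by nra. assert (L^2 <= 4*e^2) by nra. nra. }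
      assert (Hth1 : -1 <= th <= 1).
      { assert (th^2 * r^2 <= r^2) by nra. assert (th^2 <= 1).
        { apply Rmult_le_reg_r with (r^2); nra. } nra. }
      assert (Hcos := cos_taylor th Hth1). fold c in Hcos.
      assert (Hsin := sin_taylor th Hth1). fold sn in Hsin.
      assert (HP : P <= e^2 + th^2) by (rewrite HPe; nra).
      assert (HrP0 : 0 <= r*P) by (apply Rmult_le_pos; lra).
      assert (0 <= r*P*(r - 2*e)) by (apply Rmult_le_pos; lra).
      assert (Hr2P : r * P * (r + 2*e) <= 2 * r^2 * P) by nra.
      assert (H2 : 2 * r^2 * P <= 2*r^2*e^2 + 2*(th*r)^2) by nra.
      assert (Hr2 : r^2 <= 1) by nra.
      split.
      * split; [nra|]. nra.
      * assert (HTe : T = t*(s^2 - 1 + 2*s*L) + 2*s*r*(sn - th)).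
        { unfold T. assert (2*s*r*th = 2*s*(t*L)) by (rewrite <- Hth; ring). nra. }
        assert (HA : - e^2 <= s^2 - 1 + 2*s*L <= e^2).
        { assert (s * L <= 1 - s).
          { destruct HL as [_ HL']. apply Rmult_le_compat_l with (r:=s) in HL'; [|lra].
            assert (s * (/s - 1) = 1 - s) by (field; lra). lra. }
          unfold e; nra. }
        assert (HB : - (e^2) <= t*(s^2 - 1 + 2*s*L) <= e^2) by nra.
        assert (HC : - (r*th^2/3) <= 2*s*r*(sn - th) <= r*th^2/3).
        { assert (0 <= s*r <= r) by nra. assert (0 <= th^2) by nra. nra. }
        assert (HD : - (e^2 + r*th^2/3) <= T <= e^2 + r*th^2/3) by lra.
        assert (HE : (e^2 + r*th^2/3) * (r + 2*e) <= 2*e^2 + 2/3*(th*r)^2) by nra.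
        split; nra.
Qed.

Lemma kn4 (x y t : R) : knorm (x,y,t) ^ 4 = (x^2+y^2)^2 + t^2.
Proof. apply (knorm_facts (x,y,t)). Qed.

Lemma cygan (q a : H1) (s rho : R) : 0 <= s -> 0 <= rho -> knorm q = s ->
  absz2 q = s^2 * rho^2 -> inbdB a ->
  1 <= s^2 + kdist q a ^2 + 2*s*rho*kdist q a.
Proof.
  intros Hs Hrho Hq Haq Ha. unfold inbdB in Ha.
  destruct q as ((qx,qy),qt). destruct a as ((ax,ay),at_).
  unfold kdist, hmul, hinv, absz2, hx, hy, ht in *; cbn [fst snd] in *.
  set (u := - ax + qx). set (v := - ay + qy).
  set (p := - at_ + qt - 2 * - ax * qy + 2 * - ay * qx).
  pose proof (kn4 ax ay at_) as Fa. pose proof (kn4 qx qy qt) as Fq.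
  pose proof (kn4 u v p) as Fh. pose proof (knorm_facts (u,v,p)) as [Hd _].
  set (d := knorm (u, v, p)) in *.
  rewrite Ha in Fa. rewrite Hq in Fq.
  set (N := u^2 + v^2) in *.
  set (Xq := qx^2 + qy^2) in *.
  assert (HN0 : 0 <= N) by (unfold N; nra).
  assert (HNd : N <= d^2).
  { destruct (Rle_dec N (d^2)) as [|Hn]; [assumption|].
    assert (0 <= d^2) by nra. assert ((d^2)^2 < N^2) by nra.
    replace ((d^2)^2) with (d^4) in * by ring. pose proof (pow2_ge_0 p). lra. }
  assert (T1 : (Xq + N)^2 + (qt + - p)^2 <= (s^2 + d^2)^2).
  { apply tri2.
    - nra.
    - nra.
    - replace ((s^2)^2) with (s^4) by ring. lra.
    - replace ((d^2)^2) with (d^4) by ring. lra. }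
  set (g1 := -2*(qx*u + qy*v)). set (g2 := 2*(v*qx - u*qy)).
  assert (T2 : ((Xq + N) + g1)^2 + ((qt + - p) + g2)^2 <= ((s^2 + d^2) + 2*s*rho*d)^2).
  { apply tri2.
    - nra.
    - assert (0 <= s*rho*d) by (apply Rmult_le_pos; [apply Rmult_le_pos|]; lra). lra.
    - exact T1.
    - assert (E : g1^2 + g2^2 = 4 * Xq * N) by (unfold g1, g2, Xq, N; ring).
      rewrite E, Haq.
      assert (0 <= s^2*rho^2) by nra.
      assert (s^2*rho^2*N <= s^2*rho^2*d^2) by (apply Rmult_le_compat_l; lra).
      nra. }
  assert (EX : Xq + N + g1 = ax^2 + ay^2) by (unfold Xq, N, g1, u, v; ring).
  assert (EY : qt + - p + g2 = at_) by (unfold p, g2, u, v; ring).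
  rewrite EX, EY in T2.
  assert (HS : 0 <= s^2 + d^2 + 2*s*rho*d).
  { assert (0 <= s*rho*d) by (apply Rmult_le_pos; [apply Rmult_le_pos|]; lra). nra. }
  replace (1^4) with 1 in Fa by ring.
  nra.
Qed.

Lemma dist_exists (q w : H1) : inbdB w -> exists m, is_dist_to_set q inbdB m.
Proof.
  intros Hw.
  set (E := fun v => forall a, inbdB a -> v <= kdist q a).
  assert (Hb : bound E).
  { exists (kdist q w). intros v Hv. apply Hv, Hw. }
  assert (He : exists x, E x).
  { exists 0. intros a _. unfold kdist. apply knorm_facts. }
  destruct (completeness E Hb He) as [m [Hub Hlub]].
  exists m. split.
  - intros a Ha. apply Hlub. intros v Hv. apply Hv, Ha.
  - intros m' Hm'. apply Hub. exact Hm'.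
Qed.

Lemma pm4 (a b : R) : (a+b)^4 <= 8*(a^4+b^4).
Proof.
  assert (H1 : (a+b)^2 <= 2*(a^2+b^2)) by (pose proof (pow2_ge_0 (a-b)); nra).
  assert (H2 : (a^2+b^2)^2 <= 2*(a^4+b^4)) by (pose proof (pow2_ge_0 (a^2-b^2)); nra).
  assert (0 <= (a+b)^2) by nra.
  assert (((a+b)^2)^2 <= (2*(a^2+b^2))^2) by (apply pow_incr; lra).
  replace ((a+b)^4) with (((a+b)^2)^2) by ring. nra.
Qed.

Lemma lower_from_cygan (s rho sig dl : R) : 0 < s < 1 -> 0 <= rho -> 0 < sig -> sig^2 = 1 - s^2 ->
  0 <= dl -> 1 <= s^2 + dl^2 + 2*s*rho*dl -> sig^2 / (2*(rho+sig)) <= dl.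
Proof.
  intros Hs Hr Hsig Hsig2 Hdl H.
  set (K := 2*(rho+sig)). assert (HK : 0 < K) by (unfold K; lra).
  set (l := sig^2 / K). assert (Hl : l * K = sig^2) by (unfold l; field; lra).
  destruct (Rle_dec l dl) as [|Hn]; [assumption|]. exfalso.
  assert (dl < l) by lra.
  assert (A : dl * K < sig^2) by (rewrite <- Hl; apply Rmult_lt_compat_r; lra).
  assert (B : dl < sig/2) by (unfold K in A; nra).
  assert (C : dl^2 <= dl*sig/2) by nra.
  assert (0 <= rho*dl) by (apply Rmult_le_pos; lra).
  assert (D : 2*s*rho*dl <= 2*rho*dl) by nra.
  assert (E : dl*sig/2 + 2*rho*dl <= dl*K) by (unfold K; nra).
  lra.
Qed.

Theorem proposition2p6 :
  exists kappa : R, 0 < kappa /\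
    forall omega : H1, inbdB omega -> absz2 omega <> 0 ->
      forall s : R, 0 < s < 1 -> Gamma kappa omega (gamma_curve s omega).
Proof.
  exists 26. split; [lra|].
  intros w Hw Hr0 s Hs.
  destruct (dist_exists (gamma_curve s w) w Hw) as [m Hm].
  destruct w as ((x,y),t).
  unfold Gamma, inB. unfold inbdB in Hw.
  unfold absz2, hx, hy, ht in Hr0; cbn [fst snd] in Hr0.
  set (r := x^2+y^2) in *.
  assert (Hr : 0 < r) by (assert (0 <= r) by (unfold r; nra); lra).
  assert (Hrt : r^2 + t^2 = 1).
  { pose proof (kn4 x y t) as F. rewrite Hw in F. fold r in F. lra. }
  set (th := - (t / r) * ln s).
  set (c := cos th). set (sn := sin th).
  assert (Hcs : c^2 + sn^2 = 1).
  { pose proof (sin2_cos2 th). unfold Rsqr in H. fold c sn in H. lra. }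
  assert (Hq : gamma_curve s (x,y,t) = (s*(x*c - y*sn), s*(x*sn + y*c), s^2*t)).
  { unfold gamma_curve, absz2, hx, hy, ht; cbn [fst snd]. reflexivity. }
  rewrite Hq in Hm |- *.
  assert (Habs : (s*(x*c - y*sn))^2 + (s*(x*sn + y*c))^2 = s^2 * r).
  { transitivity (s^2 * r * (c^2 + sn^2)); [unfold r; ring|]. rewrite Hcs; ring. }
  assert (Hkq : knorm (s*(x*c - y*sn), s*(x*sn + y*c), s^2*t) = s).
  { apply root4_eq; [apply knorm_facts|lra|].
    rewrite kn4, Habs. transitivity (s^4 * (r^2+t^2)); [ring|]. rewrite Hrt; ring. }
  set (rho := sqrt r). assert (Hrho : 0 < rho) by (apply sqrt_lt_R0; lra).
  assert (Hrho2 : rho^2 = r) by (apply pow2_sqrt; lra).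
  set (sig := sqrt (1 - s^2)).
  assert (Hsig : 0 < sig) by (apply sqrt_lt_R0; nra).
  assert (Hsig2 : sig^2 = 1 - s^2) by (apply pow2_sqrt; nra).
  set (l := sig^2 / (2*(rho+sig))).
  assert (Hlow : forall a, inbdB a -> l <= kdist (s*(x*c - y*sn), s*(x*sn + y*c), s^2*t) a).
  { intros a Ha. unfold l. apply (lower_from_cygan s rho sig); try lra.
    - unfold kdist. apply knorm_facts.
    - apply cygan; [lra|lra|exact Hkq| |exact Ha].
      unfold absz2, hx, hy; cbn [fst snd]. rewrite Habs, Hrho2. ring. }
  assert (Hlm : l <= m) by (apply (proj2 Hm); exact Hlow).
  split; [lra|].
  exists m. split; [exact Hm|].
  set (D := kdist (s*(x*c - y*sn), s*(x*sn + y*c), s^2*t) (x,y,t)).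
  assert (HD0 : 0 <= D) by (unfold D, kdist; apply knorm_facts).
  set (P := 1 - 2*s*c + s^2). set (T := (s^2-1)*t + 2*s*r*sn).
  assert (HD4 : D^4 = (r*P)^2 + T^2).
  { unfold D, kdist, hmul, hinv, hx, hy, ht; cbn [fst snd]. rewrite kn4.
    assert (E1 : (- x + s * (x * c - y * sn)) ^ 2 + (- y + s * (x * sn + y * c)) ^ 2 = r*P).
    { transitivity (s^2 * r * (c^2 + sn^2) - 2*s*r*c + r); [unfold r; ring|].
      rewrite Hcs. unfold P; ring. }
    rewrite E1. unfold T, r. ring. }
  assert (Hthr : th * r = t * (- ln s)) by (unfold th; field; lra).
  destruct (est r t s th (- ln s) Hr Hrt Hs Hthr (ln_bounds s ltac:(lra))) as [[E1 E2] [E3 E4]].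
  fold c sn in E1, E2, E3, E4. fold P in E1, E2. fold T in E3, E4.
  set (e := 1 - s) in *.
  assert (He : 0 < e) by (unfold e; lra).
  assert (Hsq1 : (r*P*(r+2*e))^2 <= (48*e^2)^2) by (apply pow_incr; lra).
  assert (Hsq2 : (T*(r+2*e))^2 <= (24*e^2)^2).
  { destruct (Rle_dec 0 (T*(r+2*e))).
    - apply pow_incr; lra.
    - replace ((T*(r+2*e))^2) with ((-(T*(r+2*e)))^2) by ring. apply pow_incr; lra. }
  assert (Hmain : D^4 * (r+2*e)^2 <= 2880 * e^4).
  { replace (D^4 * (r+2*e)^2) with ((r*P*(r+2*e))^2 + (T*(r+2*e))^2) by (rewrite HD4; ring).
    nra. }
  assert (Hs1 : (rho+sig)^4 <= 8*(r+2*e)^2).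
  { pose proof (pm4 rho sig).
    assert (rho^4 + sig^4 <= (r + 2*e)^2).
    { replace (rho^4) with ((rho^2)^2) by ring. replace (sig^4) with ((sig^2)^2) by ring.
      rewrite Hrho2, Hsig2. assert (0 <= 1 - s^2 <= 2*e) by (unfold e; nra). nra. }
    lra. }
  assert (HD4' : 0 <= D^4) by (apply pow_le; lra).
  assert (Hfin : (D*(rho+sig))^4 <= (13*sig^2)^4).
  { replace ((D*(rho+sig))^4) with (D^4 * (rho+sig)^4) by ring.
    assert (D^4 * (rho+sig)^4 <= D^4 * (8*(r+2*e)^2)) by (apply Rmult_le_compat_l; lra).
    assert (e <= sig^2) by (rewrite Hsig2; unfold e; nra).
    assert (e^4 <= (sig^2)^4) by (apply pow_incr; lra).
    replace ((13*sig^2)^4) with (28561 * (sig^2)^4) by ring.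
    nra. }
  apply root4_le in Hfin; [|nra|nra].
  assert (Hl2 : l * (2*(rho+sig)) = sig^2) by (unfold l; field; lra).
  assert (D * (2*(rho+sig)) < 27 * (l * (2*(rho+sig)))) by nra.
  assert (D < 27 * l) by nra.
  lra.
Qed.
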